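(* Let $\hat H_n=2^{-n}H_n$ be the monic Hermite polynomials, and let $(\rho_n)_{n\ge0}$ be positive real numbers such that, for some $0\le\nu\le1/4$, $$\frac{2\rho_{n-1}}{\rho_n}\le n^\nu,\quad n\ge1.$$ Let $K$ be a positive integer and $\gamma_0,\dots,\gamma_K$ real numbers with $\gamma_0=1$, $\gamma_K\neq0$. Then the polynomial $$q_n(x)=\sum_{j=0}^K\gamma_j\rho_{n-j}\hat H_{n-j}(x)$$ has only real zeros for $$n\ge\max\left\{6^{2\nu}\left(\frac{6^{\nu(K-1)}-1}{6^\nu-1}\right)^24^{K-2}\max{}^2\{|\gamma_j|:2\le j\le K\},\ 2K\right\}.$$ Moreover, the zeros are simple and interlace the zeros of $H_{n-1}$.
   Context: $H_n$ denotes the Hermite polynomial of degree $n$ (orthogonal with respect to $e^{-x^2}dx$ on $\mathbb{R}$, leading coefficient $2^n$); the monic ones satisfy $x\hat H_n=\hat H_{n+1}+\frac n2\hat H_{n-1}$. When $\nu=0$ the quotient $\frac{6^{\nu(K-1)}-1}{6^\nu-1}$ is to be read as $\sum_{j=0}^{K-2}6^{\nu j}=K-1$. Interlacing: given two finite sets $U,V$ of reals, $U$ interlaces $V$ if $\min U<\min V$ and between any two consecutive elements of either set there is an element of the other; here $U$ is the zero set of $q_n$ and $V$ that of $H_{n-1}$. *)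

(* Defs.v *)
From HB Require Import structures.
From mathcomp Require Import all_boot all_order all_algebra.
From mathcomp Require Import complex.
From mathcomp Require Import reals exp.
Set Implicit Arguments. Unset Strict Implicit. Unset Printing Implicit Defensive.
Import Order.TTheory GRing.Theory Num.Theory.
Local Open Scope ring_scope.

(* Physicists' Hermite polynomials: H_0 = 1, H_1 = 2x,
   H_{n+1} = 2x H_n - 2n H_{n-1}  (leading coefficient 2^n). *)
Fixpoint hermite_pair (R : nzRingType) (n : nat) : {poly R} * {poly R} :=
  match n with
  | 0 => (1, 0)
  | m.+1 => let (h, hp) := hermite_pair R m in
            ((2%:R *: 'X) * h - (2 * m)%:R *: hp, h)
  end.

Definition hermite (R : nzRingType) (n : nat) : {poly R} := (hermite_pair R n).1.

Definition hermite_monic (R : fieldType) (n : nat) : {poly R} :=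
  (2%:R ^- n) *: hermite R n.

Definition consecutive_sep (R : realDomainType) (U V : R -> Prop) : Prop :=
  forall a b, U a -> U b -> a < b -> (forall c, U c -> ~ (a < c < b)) ->
  exists v, V v /\ a < v < b.

Definition interlaces (R : realDomainType) (U V : R -> Prop) : Prop :=
  (exists u, U u /\ forall v, V v -> u < v) /\
  consecutive_sep U V /\ consecutive_sep V U.

(* sum_{j=0}^{K-2} 6^{nu j}, which equals (6^{nu(K-1)}-1)/(6^nu-1) for nu>0
   and K-1 for nu=0. *)
Definition geom6 (R : realType) (nu : R) (K : nat) : R :=
  \sum_(j < K.-1) powR 6 (nu * j%:R).

(* The threshold for n. For K = 1 the max over the empty set is 0. *)
Definition threshold (R : realType) (nu : R) (K : nat) (gamma : nat -> R) : R :=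
  Num.max
    (powR 6 (2 * nu) * (geom6 nu K) ^+ 2 * powR 4 (K%:R - 2)
       * (\big[Num.max/0]_(2 <= j < K.+1) `|gamma j|) ^+ 2)
    (2 * K)%:R.

Definition q_poly (R : realType) (rho gamma : nat -> R) (K n : nat) : {poly R} :=
  \sum_(0 <= j < K.+1) (gamma j * rho (n - j)%N) *: hermite_monic R (n - j)%N.

(* Main.v *)
Require Import Defs.
From HB Require Import structures.
From mathcomp Require Import all_boot all_order all_algebra.
From mathcomp Require Import complex polyrcf.
From mathcomp Require Import reals exp.
From mathcomp Require Import ring lra zify.
Import Order.TTheory GRing.Theory Num.Theory.
Local Open Scope ring_scope.

Ltac slia := repeat (match goal with H : ?T |- _ => lazymatch T with
  | is_true (_ <= _)%N => fail | is_true (_ < _)%N => fail | @eq nat _ _ => fail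
  | nat => fail | _ => clear H end end); lia.

Section Herm.
Variable R : realType.

Lemma herm_rec k : hermite R k.+2 =
  (2%:R *: 'X) * hermite R k.+1 - (2 * k.+1)%:R *: hermite R k.
Proof.
rewrite /hermite /=.
case E: (hermite_pair R k) => [h hp] /=.
by [].
Qed.

Notation hm := (hermite_monic R).

Lemma hm0 : hm 0 = 1.
Proof. by rewrite /hermite_monic /hermite /= expr0 invr1 scale1r. Qed.

Lemma hm1 : hm 1 = 'X.
Proof.
rewrite /hermite_monic /hermite /= expr1 mulr1 scaler0 subr0 scalerA mulVf ?scale1r //.
by rewrite pnatr_eq0.
Qed.

Lemma hm_rec k : hm k.+2 = 'X * hm k.+1 - (k.+1%:R / 2) *: hm k.
Proof.
rewrite /hermite_monic herm_rec scalerBr -scalerAl scalerA scalerA -scalerAr.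
have h2 : (2:R) != 0 by rewrite pnatr_eq0.
congr (_ - _).
  congr (_ *: _); rewrite !exprS !invfM; field.
  by rewrite expf_neq0.
have sA : forall a b (p : {poly R}), a *: (b *: p) = (a*b) *: p by move=> *; rewrite scalerA.
rewrite sA; congr (_ *: _); rewrite natrM !exprS !invfM; field.
by rewrite expf_neq0.
Qed.

Lemma hm_size_lc k : size (hm k) = k.+1 /\ lead_coef (hm k) = 1.
Proof.
elim: k {-2}k (leqnn k) => [|N IH] k hk.
  by move: hk; rewrite leqn0 => /eqP ->; rewrite hm0 size_poly1 lead_coef1.
case: k hk => [|[|k]] hk.
- by rewrite hm0 size_poly1 lead_coef1.
- by rewrite hm1 size_polyX lead_coefX.
have [s1 l1] := IH k.+1 hk.
have [s0 l0] := IH k (leq_trans (leqnSn _) hk).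
have nz1 : hm k.+1 != 0 by rewrite -lead_coef_eq0 l1 oner_neq0.
have sX : size ('X * hm k.+1) = k.+3 by rewrite mulrC size_mulX // s1.
have sc : (size ((k.+1%:R / 2) *: hm k)%R < size ('X * hm k.+1)%R)%N.
  by rewrite sX (leq_ltn_trans (size_scale_leq _ _)) // s0.
rewrite hm_rec; split.
  by rewrite size_addl ?size_opp // sX.
rewrite lead_coefDl ?size_opp // mulrC lead_coefMX //.
Qed.

Definition hv k (x : R) := (hm k).[x].

Lemma hv_rec k x : hv k.+2 x = x * hv k.+1 x - (k.+1%:R / 2) * hv k x.
Proof. by rewrite /hv hm_rec !hornerE. Qed.

Lemma hv0 x : hv 0 x = 1. Proof. by rewrite /hv hm0 hornerE. Qed.
Lemma hv1 x : hv 1 x = x. Proof. by rewrite /hv hm1 hornerE. Qed.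

Lemma seq_pos (s : nat -> R) (t : R) m :
  0 < t -> (2 * m.-1)%:R <= t ^+ 2 -> s 0%N = 1 -> s 1%N = t ->
  (forall k, s k.+2 = t * s k.+1 - (k.+1%:R / 2) * s k) ->
  0 < s m.
Proof.
move=> t0 tm s0 s1 sr.
have key : forall k, (k.+1 <= m)%N -> 0 < s k /\ t * s k <= 2 * s k.+1.
  elim=> [|k IH] hk.
    by rewrite s0 s1; split; [lra|lra].
  have [h1 h2] := IH (ltnW hk).
  have p1 : 0 < s k.+1 by nra.
  split => //.
  have hk2 : (k.+1%:R * 2 <= t ^+ 2).
    apply: le_trans tm; rewrite -natrM ler_nat mulnC leq_mul2l /=.
    by rewrite -ltnS (leq_trans hk) // -(@prednK m) ?(leq_trans _ hk).
  rewrite sr.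
  have kp : 0 <= (k.+1%:R : R) by [].
  have H : 0 <= t * (t * s k.+1 - k.+1%:R * s k) by nra.
  rewrite pmulr_rge0 // in H.
  have -> : 2 * (t * s k.+1 - k.+1%:R / 2 * s k) = 2 * t * s k.+1 - k.+1%:R * s k by field.
  nra.
case: m tm key => [|m] tm key; first by rewrite s0.
have [h1 h2] := key m (leqnn _).
nra.
Qed.

Lemma hv_pos m x : 0 < x -> (2 * m.-1)%:R <= x ^+ 2 -> 0 < hv m x.
Proof.
move=> x0 xm; apply: (@seq_pos (fun k => hv k x) x m) => //.
- exact: hv0.
- exact: hv1.
- by move=> k; rewrite hv_rec.
Qed.

Lemma hv_neg m x : x < 0 -> (2 * m.-1)%:R <= x ^+ 2 -> 0 < (-1) ^+ m * hv m x.
Proof.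
move=> x0 xm; apply: (@seq_pos (fun k => (-1) ^+ k * hv k x) (- x) m) => //.
- lra.
- by rewrite sqrrN.
- by rewrite hv0 expr0 mulr1.
- by rewrite hv1 expr1 mulN1r.
- by move=> k; rewrite hv_rec !exprS; ring.
Qed.

Lemma hv_root_bound m y : (0 < m)%N -> hv m y = 0 -> y ^+ 2 < (2 * m)%:R.
Proof.
move=> m0 hy; rewrite ltNge; apply/negP => hb.
have hb' : (2 * m.-1)%:R <= y ^+ 2.
  by apply: le_trans hb; rewrite ler_nat leq_mul2l leq_pred orbT.
have [y0|y0|y0] := ltrgtP y 0.
- by have := @hv_neg m y y0 hb'; rewrite hy mulr0 ltxx.
- by have := @hv_pos m y y0 hb'; rewrite hy ltxx.
- move: hb; rewrite y0 expr0n /= ler_nat leqn0 muln_eq0 /=.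
  by move=> /eqP m0'; rewrite m0' in m0.
Qed.

Definition incr (z : nat -> R) m := forall i j, (i < j)%N -> (j < m)%N -> z i < z j.

Lemma incr_step z m : (forall i, (i.+1 < m)%N -> z i < z i.+1) -> incr z m.
Proof.
move=> h i; elim=> // j IH; rewrite ltnS leq_eqVlt => /orP[/eqP <-|lt] jm.
  exact: h.
exact: lt_trans (IH lt (ltnW jm)) (h j jm).
Qed.

Lemma sign_prod m (z : nat -> R) w i : (i <= m)%N ->
  (forall j, (j < i)%N -> z j < w) -> (forall j, (i <= j)%N -> (j < m)%N -> w < z j) ->
  0 < (-1) ^+ (m - i) * \prod_(j < m) (w - z j).
Proof.
elim: m i => [|m IH] i.
  by rewrite leqn0 => /eqP -> _ _; rewrite big_ord0 expr0 mulr1.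
rewrite leq_eqVlt => /orP[/eqP ->|lt] hl hr.
  rewrite subnn expr0 mul1r; apply: prodr_gt0 => j _.
  by rewrite subr_gt0; apply: hl.
rewrite ltnS in lt.
have := IH i lt hl (fun j a b => hr j a (ltnW b)).
have hm : w - z m < 0 by rewrite subr_lt0; apply: hr.
rewrite big_ord_recr /= subSn // exprS.
set P := \prod_(j < m) _; set s := (-1) ^+ (m - i).
move=> H; nra.
Qed.

Lemma sgn_alt a (x y : R) : 0 < (-1) ^+ a.+1 * x -> 0 < (-1) ^+ a * y -> x * y < 0.
Proof.
rewrite exprS mulN1r; set s := (-1) ^+ a => h1 h2.
have hs : s * s = 1 by rewrite /s -expr2 -exprM mulnC exprM sqrrN expr1n expr1n.
have := mulr_gt0 h1 h2.
have -> : - s * x * (s * y) = - (s * s) * (x * y) by ring.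
by rewrite hs mulN1r oppr_gt0.
Qed.

Lemma prod_mkseq (w : nat -> R) n (F : R -> {poly R}) :
  \prod_(x <- mkseq w n) F x = \prod_(i < n) F (w i).
Proof. by rewrite /mkseq big_map -(subn0 n) -/(index_iota 0 n) big_mkord subn0. Qed.

Lemma prod_mkseqR (w : nat -> R) n (F : R -> R) :
  \prod_(x <- mkseq w n) F x = \prod_(i < n) F (w i).
Proof. by rewrite /mkseq big_map -(subn0 n) -/(index_iota 0 n) big_mkord subn0. Qed.

Lemma incr_uniq w n : incr w n -> uniq (mkseq w n).
Proof.
move=> hw; rewrite /mkseq map_inj_in_uniq ?iota_uniq // => i j.
rewrite !mem_iota /= !add0n => hi hj eq.
have [lt|gt|//] := ltngtP i j.
- by have := hw i j lt hj; rewrite eq ltxx.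
- by have := hw j i gt hi; rewrite eq ltxx.
Qed.

Lemma mem_mkseq (w : nat -> R) n x : (x \in mkseq w n) = [exists i : 'I_n, x == w i].
Proof.
apply/idP/existsP.
  by case/mapP => i; rewrite mem_iota add0n /= => hi ->; exists (Ordinal hi).
by move=> [i /eqP ->]; apply/mapP; exists (nat_of_ord i); rewrite // mem_iota add0n /=.
Qed.

Lemma interl_roots (p : {poly R}) m (z : nat -> R) L U :
  size p = m.+2 -> 0 < lead_coef p -> incr z m ->
  (forall i, (i < m)%N -> 0 < (-1) ^+ (m - i) * p.[z i]) ->
  (forall i, (i < m)%N -> L < z i < U) -> L < U ->
  0 < (-1) ^+ m.+1 * p.[L] -> 0 < p.[U] ->
  exists w : nat -> R,
    [/\ forall i, (i <= m)%N -> root p (w i),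
        forall i, (0 < i)%N -> (i <= m)%N -> z i.-1 < w i,
        forall i, (i < m)%N -> w i < z i,
        incr w m.+1 &
        p = lead_coef p *: \prod_(i < m.+1) ('X - (w i)%:P)].
Proof.
move=> sp lp zi zs zLU LU pL pU.
pose lft i := if i == 0%N then L else z i.-1.
pose rgt i := if i == m then U else z i.
have claim : forall i, (i <= m)%N -> lft i < rgt i /\ p.[lft i] * p.[rgt i] < 0.
  move=> i him; split.
    rewrite /lft /rgt; case: eqP => [->|i0]; case: eqP => [im|im] //.
    - have m0 : (0 < m)%N by rewrite lt0n eq_sym; apply/eqP.
      by case/andP: (zLU 0%N m0).
    - have i0' : (0 < i)%N by rewrite lt0n; apply/eqP.
      have : (i.-1 < m)%N by rewrite -im prednK.
      by move/zLU/andP => [].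
    - have i0' : (0 < i)%N by rewrite lt0n; apply/eqP.
      apply: zi; first by rewrite prednK.
      by rewrite ltn_neqAle him andbT; apply/eqP.
  have hr : 0 < (-1) ^+ (m - i) * p.[rgt i].
    rewrite /rgt; case: eqP => [->|im]; first by rewrite subnn expr0 mul1r.
    by apply: zs; rewrite ltn_neqAle him andbT; apply/eqP.
  have hl : 0 < (-1) ^+ (m - i).+1 * p.[lft i].
    rewrite /lft; case: eqP => [->|i0]; first by rewrite subn0.
    have i0' : (0 < i)%N by rewrite lt0n; apply/eqP.
    have hi1 : (i.-1 < m)%N by rewrite prednK.
    have e : (m - i.-1 = (m - i).+1)%N by rewrite -subSn // -[in RHS](prednK i0') subSS.
    by have := zs i.-1 hi1; rewrite e.
  exact: sgn_alt hl hr.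
have F : forall i, {x | (i <= m)%N -> lft i < x < rgt i /\ root p x}.
  move=> i; case him: (i <= m)%N; last by exists 0.
  have [h1 h2] := claim i him.
  have [x hx rx] := poly_ivtoo (ltW h1) h2.
  by exists x => _; split => //; rewrite in_itv /= in hx.
pose w i := sval (F i).
have wP : forall i, (i <= m)%N -> lft i < w i < rgt i /\ root p (w i).
  by move=> i; rewrite /w; case: (F i).
have h2 : forall i, (0 < i)%N -> (i <= m)%N -> z i.-1 < w i.
  move=> i i0 im; have [/andP[]] := wP i im.
  by rewrite /lft; case: eqP => [e|//]; rewrite e in i0.
have h3 : forall i, (i < m)%N -> w i < z i.
  move=> i im; have [/andP[_]] := wP i (ltnW im).
  by rewrite /rgt; case: eqP => // ie; rewrite ie ltnn in im.
have h4 : incr w m.+1.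
  apply: incr_step => i; rewrite ltnS => im.
  exact: lt_trans (h3 i im) (h2 i.+1 isT im).
exists w; split => //.
- by move=> i im; case: (wP i im).
rewrite -(prod_mkseq w m.+1 (fun x => 'X - x%:P)); apply: all_roots_prod_XsubC.
- by rewrite size_mkseq sp.
- apply/allP => x; rewrite mem_mkseq => /existsP [i /eqP ->].
  by case: (wP i (ltn_ord i)).
- by rewrite uniq_rootsE incr_uniq.
Qed.

Lemma incr_le z m i j : incr z m -> (i <= j)%N -> (j < m)%N -> z i <= z j.
Proof.
move=> hz; rewrite leq_eqVlt => /orP[/eqP ->|lt] jm //.
exact: ltW (hz _ _ lt jm).
Qed.

Lemma interl_sign (z w : nat -> R) m i :
  incr z m -> (i <= m)%N ->
  ((0 < i)%N -> z i.-1 < w i) -> ((i < m)%N -> w i < z i) ->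
  0 < (-1) ^+ (m - i) * \prod_(j < m) (w i - z j).
Proof.
move=> hz im hl hr; apply: sign_prod => //.
  move=> j ji; have i0 : (0 < i)%N by apply: leq_ltn_trans ji.
  apply: le_lt_trans (hl i0); apply: incr_le hz _ _; first by rewrite -ltnS prednK.
  by rewrite prednK // (leq_trans _ im).
move=> j ij jm; apply: lt_le_trans (hr (leq_ltn_trans ij jm)) _.
exact: incr_le hz ij jm.
Qed.

Lemma herm_zeros m : exists z : nat -> R,
  [/\ incr z m.+1, hm m.+1 = \prod_(i < m.+1) ('X - (z i)%:P) &
      forall i, (i < m.+1)%N -> 0 < (-1) ^+ (m - i) * hv m (z i)].
Proof.
elim: m => [|m [z [zi zp zs]]].
  exists (fun=> 0); split.
  - by move=> i j; case: i => [|i]; case: j => [|j].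
  - by rewrite big_ord1 subr0 hm1.
  - by move=> i; rewrite ltnS leqn0 => /eqP ->; rewrite expr0 hv0 mul1r.
have hroot : forall i, (i < m.+1)%N -> hv m.+1 (z i) = 0.
  move=> i im; rewrite /hv zp horner_prod; apply/eqP; rewrite prodf_seq_eq0.
  apply/hasP; exists (Ordinal im); first by rewrite mem_index_enum.
  by rewrite /= hornerXsubC subrr.
set B : R := (2 * m.+1)%:R.
have B1 : 1 <= B by rewrite ler1n muln_gt0.
have hB : (2 * m.+1)%:R <= B ^+ 2 by rewrite -/B; nra.
have [s2 l2] := hm_size_lc m.+2.
have := @interl_roots (hm m.+2) m.+1 z (- B) B s2.
rewrite l2 ltr01 => /(_ isT zi) [].
- move=> i im; rewrite -/(hv _ _) hv_rec hroot // mulr0 add0r subSn // exprS.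
  have := zs i im; set s := (-1) ^+ (m - i); move=> H.
  have k0 : 0 < (m.+1%:R / 2 : R) by rewrite divr_gt0 ?ltr0n.
  have -> : -1 * s * - (m.+1%:R / 2 * hv m (z i)) = (m.+1%:R / 2) * (s * hv m (z i)) by ring.
  exact: mulr_gt0.
- move=> i im; have := @hv_root_bound m.+1 (z i) (ltn0Sn m) (hroot i im).
  rewrite -/B => hz; apply/andP; split; nra.
- lra.
- have := @hv_neg m.+2 (- B); rewrite /hv; apply; first by lra.
  by rewrite sqrrN.
- have := @hv_pos m.+2 B; rewrite /hv; apply; first by lra.
  by [].
move=> w [wr wl wr' wi wp]; exists w; split => //.
  by rewrite {1}wp scale1r.
move=> i im; rewrite /hv zp horner_prod.
under eq_bigr do rewrite hornerXsubC.
apply: interl_sign => //; first by move=> i0; apply: wl.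
by move=> i0; apply: wr'.
Qed.

Lemma key_scalar (y u : R) n : 1 <= u -> u ^+ 4 <= n -> y ^+ 2 <= 2 * n ->
  4 * `|y| * u + u ^+ 2 <= 4 * n + 8.
Proof.
move=> u1 un yn.
have ay : `|y| ^+ 2 = y ^+ 2 by rewrite real_normK ?num_real.
have h1 : 4 * `|y| * u <= `|y| ^+ 2 + 4 * u ^+ 2.
  have : 0 <= (`|y| - 2 * u) ^+ 2 by apply: sqr_ge0.
  nra.
have h2 : 5 * u ^+ 2 <= 2 * u ^+ 4 + 8.
  have : 0 <= (2 * u ^+ 2 - 5 / 2) ^+ 2 by apply: sqr_ge0.
  have -> : u ^+ 4 = (u ^+ 2) ^+ 2 by rewrite -exprM.
  nra.
lra.
Qed.

Lemma back_bound (h : nat -> R) (n K : nat) (y u A : R) :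
  (forall k, h k.+2 = y * h k.+1 - (k.+1%:R / 2) * h k) ->
  h n.-1 = 0 -> A = `|h (n - 2)%N| -> 1 <= u -> u ^+ 4 <= n%:R ->
  y ^+ 2 <= (2 * n)%:R -> (2 * K <= n)%N ->
  forall j, (1 <= j)%N -> (j <= K)%N ->
    4 * `|h (n - j)%N| * u ^+ j.-1 <= A * u * 4 ^+ j.-1.
Proof.
move=> hrec hn1 hA u1 un yn Kn.
have A0 : 0 <= A by rewrite hA.
have P1 : 4 * `|h (n - 1)%N| * u ^+ 0 <= A * u * 4 ^+ 0.
  rewrite subn1 hn1 normr0 mulr0 mul0r expr0 mulr1; apply: mulr_ge0 => //; lra.
have P2 : 4 * `|h (n - 2)%N| * u ^+ 1 <= A * u * 4 ^+ 1.
  by rewrite -hA expr1 expr1; lra.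
have Q : forall j, (j.+2 <= K)%N ->
    4 * `|h (n - j.+1)%N| * u ^+ j <= A * u * 4 ^+ j /\
    4 * `|h (n - j.+2)%N| * u ^+ j.+1 <= A * u * 4 ^+ j.+1.
  elim=> [|j IH] hj; first by split.
  have [IH1 IH2] := IH (ltnW hj); split => //.
  have jn : (j.+3 <= n)%N.
    by apply: leq_trans hj _; apply: leq_trans Kn; rewrite leq_pmull.
  set N := (n - j.+3)%N.
  have e1 : (n - j.+2 = N.+1)%N by rewrite /N; slia.
  have e2 : (n - j.+1 = N.+2)%N by rewrite /N; slia.
  rewrite e1 in IH2; rewrite e2 in IH1.
  set c : R := N.+1%:R.
  have hc : (n%:R + 2 <= 2 * c)%R.
    rewrite /c /N -natrM -(natrD _ n 2) ler_nat.
    slia.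
  have c0 : 0 < c by rewrite ltr0n.
  have yn2 : y ^+ 2 <= 2 * n%:R by rewrite natrM in yn.
  have ks := @key_scalar y u n%:R u1 un yn2.
  have hr := hrec N; rewrite -/c in hr.
  have hcN : c * h N = 2 * (y * h N.+1 - h N.+2) by rewrite hr; field.
  have hca : c * `|h N| <= 2 * (`|y| * `|h N.+1| + `|h N.+2|).
    rewrite -(ger0_norm (ltW c0)) -normrM hcN normrM ger0_norm // ler_pM2l //.
    by rewrite -normrM; apply: ler_normB.
  move: IH1 IH2; rewrite !exprS.
  set a0 := `|h N|; set a1 := `|h N.+1|; set a2 := `|h N.+2|.
  set U := u ^+ j; set F := 4 ^+ j; move=> IH1 IH2.
  have a00 : 0 <= a0 by apply: normr_ge0.
  have a10 : 0 <= a1 by apply: normr_ge0.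
  have a20 : 0 <= a2 by apply: normr_ge0.
  have U0 : 0 <= U by rewrite exprn_ge0 //; lra.
  have F0 : 0 <= F by rewrite exprn_ge0.
  have yy : 0 <= `|y| by apply: normr_ge0.
  set Q := A * u * F.
  have Q0 : 0 <= Q by rewrite /Q !mulr_ge0 //; lra.
  have I1 : 4 * a1 * U * u <= 4 * Q by rewrite /Q; move: IH2; rewrite mulrC; nra.
  have I2 : 4 * a2 * U <= Q by rewrite /Q.
  have S1 : c * (4 * a0 * (u * (u * U))) <= 8 * U * u * u * (`|y| * a1 + a2).
    have H : 0 <= 4 * U * u * u by rewrite !mulr_ge0 //; lra.
    have := ler_wpM2l H hca.
    have -> : 4 * U * u * u * (c * a0) = c * (4 * a0 * (u * (u * U))) by ring.
    have -> : 4 * U * u * u * (2 * (`|y| * a1 + a2)) = 8 * U * u * u * (`|y| * a1 + a2) by ring.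
    by [].
  have S2 : 8 * U * u * u * (`|y| * a1 + a2) <= 2 * Q * (4 * `|y| * u + u ^+ 2).
    have : 2 * `|y| * u * (4 * a1 * U * u) <= 2 * `|y| * u * (4 * Q).
      by apply: ler_wpM2l => //; rewrite !mulr_ge0 //; lra.
    have : 2 * u ^+ 2 * (4 * a2 * U) <= 2 * u ^+ 2 * Q.
      by apply: ler_wpM2l => //; rewrite !mulr_ge0 //; lra.
    rewrite expr2; lra.
  have S3 : 2 * Q * (4 * `|y| * u + u ^+ 2) <= 2 * Q * (4 * n%:R + 8).
    by apply: ler_wpM2l => //; lra.
  have S4 : 2 * Q * (4 * n%:R + 8) <= c * (A * u * (4 * (4 * F))).
    have := ler_wpM2l Q0 hc; rewrite /Q; lra.
  have := le_trans S1 (le_trans S2 (le_trans S3 S4)).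
  by rewrite ler_pM2l.
move=> j j1 jK.
case: j j1 jK => [//|[_ _|j _ jK]]; first by rewrite expr0 in P1 *.
by have [] := Q j jK.
Qed.

Lemma rho_bound (rho : nat -> R) nu n K : (forall m, 0 < rho m) -> 0 <= nu ->
  (forall m, (1 <= m)%N -> 2 * rho m.-1 / rho m <= powR m%:R nu) -> (K < n)%N ->
  forall j, (j <= K)%N -> rho (n - j)%N <= rho n * (powR n%:R nu / 2) ^+ j.
Proof.
move=> rp nu0 hr Kn; elim=> [|j IH] jK; first by rewrite subn0 expr0 mulr1.
have h1 : (1 <= n - j)%N by slia.
have := hr _ h1; rewrite -subnS ler_pdivrMr // => H.
have hp : powR (n - j)%:R nu <= powR n%:R nu.
  by apply: ge0_ler_powR => //; rewrite ?nnegrE ?ler0n // ler_nat leq_subr.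
have IH' := IH (ltnW jK).
have u0 : 0 <= powR n%:R nu by apply: powR_ge0.
have p0 : 0 <= powR (n - j)%:R nu by apply: powR_ge0.
have r0 := rp (n - j)%N.
rewrite exprS.
set a := powR n%:R nu in hp u0 IH' *.
have : 2 * rho (n - j.+1)%N <= a * rho (n - j)%N.
  apply: le_trans H _; apply: ler_wpM2r => //; exact: ltW.
have : 0 <= (a / 2) by lra.
nra.
Qed.

Lemma q_horner (rho gamma : nat -> R) K n x :
  (q_poly rho gamma K n).[x] = \sum_(0 <= j < K.+1) gamma j * rho (n - j)%N * hv (n - j) x.
Proof. by rewrite /q_poly horner_sum; apply: eq_bigr => j _; rewrite hornerZ. Qed.

Lemma q_size (rho gamma : nat -> R) K n : 0 < rho n -> gamma 0%N = 1 -> (1 <= n)%N ->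
  size (q_poly rho gamma K n) = n.+1 /\ lead_coef (q_poly rho gamma K n) = rho n.
Proof.
move=> rp g0 n1; rewrite /q_poly big_ltn // subn0 g0 mul1r.
set r := \sum_(1 <= j < K.+1) _.
have [s0 l0] := hm_size_lc n.
have rn0 : rho n != 0 by rewrite gt_eqF.
have sr : (size r <= n)%N.
  rewrite /r big_seq_cond; apply: (big_ind (fun p : {poly R} => (size p <= n)%N)).
  - by rewrite size_poly0.
  - by move=> p1 p2 h1 h2; apply: leq_trans (size_polyD _ _) _; rewrite geq_max h1 h2.
  - move=> j /andP [hj _]; move: hj; rewrite mem_index_iota => /andP [j1 _].
    apply: leq_trans (size_scale_leq _ _) _.
    by have [-> _] := hm_size_lc (n - j); slia.
have st : size (rho n *: hm n) = n.+1 by rewrite size_scale.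
have lt : (size r < size (rho n *: hm n))%N by rewrite st ltnS.
split; first by rewrite size_addl.
by rewrite lead_coefDl // lead_coefZ l0 mulr1.
Qed.

Lemma sum_pow2 K : (1 <= K)%N ->
  \sum_(2 <= j < K.+1) (2 : R) ^+ j = 2 ^+ K.+1 - 4.
Proof.
elim: K => // K IH _.
case: K IH => [_|K IH]; first by rewrite big_geq // expr2; lra.
rewrite big_nat_recr //= IH // [in RHS]exprS; lra.
Qed.

Lemma final_ineq (M u G P6 P4 : R) (K n : nat) : 0 <= M -> 1 <= u -> u ^+ 4 <= n%:R ->
  1 <= P6 -> P6 * G ^+ 2 * P4 * M ^+ 2 <= n%:R ->
  ((2 <= K)%N -> P4 = 4 ^+ (K - 2) /\ (K.-1)%:R <= G) -> (1 <= K)%N -> (2 * K <= n)%N ->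
  M * u ^+ 2 * (2 ^+ K.+1 - 4) < 8 * (n%:R - 1).
Proof.
move=> M0 u1 un P61 th hK K1 Kn.
have n2 : (2 <= n)%N by slia.
have n2r : 2 <= (n%:R : R) by rewrite ler_nat.
case: (leqP 2 K) => K2; last first.
  have -> : K = 1%N by slia.
  by rewrite expr2 /=; lra.
have [eP4 GK] := hK K2.
have n4 : 4 <= (n%:R : R) by rewrite (ler_nat R 4 n); slia.
set T : R := 2 ^+ (K - 2).
have T1 : 1 <= T by rewrite exprn_ege1 //; lra.
have e8 : (2 : R) ^+ K.+1 = 8 * T.
  have eK : K.+1 = ((K - 2) + 3)%N by slia.
  by rewrite eK exprD /T !exprS expr0; lra.
have eP : P4 = T ^+ 2 by rewrite eP4 /T -exprM mulnC exprM; congr (_ ^+ _); lra.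
have G1 : 1 <= G by apply: le_trans GK; rewrite ler1n; slia.
have hGT : 2 * T - 1 <= G * T.
  case: (ltnP 2 K) => K3.
    have G2 : 2 <= G by apply: le_trans GK; rewrite (ler_nat R 2); slia.
    nra.
  have -> : T = 1 by rewrite /T (_ : K - 2 = 0)%N ?expr0 //; slia.
  lra.
have u0 : 0 <= u by lra.
have h1 : G ^+ 2 * T ^+ 2 * M ^+ 2 <= n%:R.
  apply: le_trans th; rewrite eP.
  have : 0 <= (G * T * M) ^+ 2 by apply: sqr_ge0.
  rewrite !exprMn; nra.
have h2 : (G * T * M * u ^+ 2) ^+ 2 <= n%:R * n%:R.
  have -> : (G * T * M * u ^+ 2) ^+ 2 = (G ^+ 2 * T ^+ 2 * M ^+ 2) * u ^+ 4 by ring.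
  apply: ler_pM => //; last by apply: exprn_ge0.
  have : 0 <= (G * T * M) ^+ 2 by apply: sqr_ge0.
  by rewrite !exprMn.
have h3 : G * T * M * u ^+ 2 <= n%:R.
  have : 0 <= G * T * M * u ^+ 2.
    by apply: mulr_ge0; [apply: mulr_ge0; [apply: mulr_ge0|]|apply: exprn_ge0]; lra.
  nra.
have h4 : M * u ^+ 2 * (2 * T - 1) <= n%:R.
  apply: le_trans h3.
  have : 0 <= M * u ^+ 2 by apply: mulr_ge0 => //; apply: exprn_ge0.
  nra.
rewrite e8; lra.
Qed.

Lemma term_alg (a A u : R) k : 0 <= a -> 0 <= A -> 1 <= u ->
  4 * a * u ^+ k <= A * u * 4 ^+ k ->
  (u / 2) ^+ k.+1 * a <= A * u ^+ 2 * 2 ^+ k.+1 / 16.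
Proof.
move=> a0 A0 u1 H.
set P := u ^+ k in H *; set Tw : R := 2 ^+ k.
have F : (4 : R) ^+ k = Tw * Tw by rewrite /Tw -exprMn; congr (_ ^+ _); lra.
rewrite F in H.
have Tw0 : 0 < Tw by rewrite exprn_gt0.
have P0 : 0 <= P by rewrite exprn_ge0 //; lra.
have -> : (u / 2) ^+ k.+1 = P * u / (2 * Tw).
  rewrite exprMn exprVn !exprSr -/P -/Tw; field.
  by rewrite gt_eqF.
rewrite [2 ^+ k.+1]exprSr -/Tw.
rewrite mulrAC ler_pdivrMr; last by lra.
have u0 : 0 <= u by lra.
have H2 := ler_wpM2l u0 H.
have -> : A * u ^+ 2 * (Tw * 2) / 16 * (2 * Tw) = u * (A * u * (Tw * Tw)) / 4.
  by rewrite expr2; field.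
lra.
Qed.

Lemma q_sign_core (rho gamma : nat -> R) nu K n' y s M :
  (forall m, 0 < rho m) -> 0 <= nu ->
  (forall m, (1 <= m)%N -> 2 * rho m.-1 / rho m <= powR m%:R nu) ->
  (1 <= K)%N -> (2 * K <= n'.+2)%N -> gamma 0%N = 1 ->
  (forall j, (2 <= j)%N -> (j <= K)%N -> `|gamma j| <= M) ->
  1 <= powR n'.+2%:R nu -> (powR n'.+2%:R nu) ^+ 4 <= n'.+2%:R ->
  M * (powR n'.+2%:R nu) ^+ 2 * (2 ^+ K.+1 - 4) < 8 * (n'.+2%:R - 1) ->
  hv n'.+1 y = 0 -> s * s = 1 -> 0 < s * hv n' y -> y ^+ 2 <= (2 * n'.+2)%:R ->
  0 < - s * (q_poly rho gamma K n'.+2).[y].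
Proof.
move=> rp nu0 hr K1 Kn g0 gM u1 u4 fin hy ss hs yb.
set n := n'.+2 in Kn u1 u4 fin yb *.
set u := powR n%:R nu in u1 u4 fin *.
set A := s * hv n' y.
have as1 : `|s| = 1.
  have : `|s| ^+ 2 = 1 by rewrite -normrX expr2 ss normr1.
  have : 0 <= `|s| by [].
  move=> h0 h1; nra.
have hA : A = `|hv n' y|.
  have e := gtr0_norm hs; rewrite normrM as1 mul1r in e.
  by rewrite e.
rewrite q_horner big_ltn // big_ltn // subn0 subn1 g0 mul1r.
rewrite /n hv_rec hy mulr0 add0r -/n.
set S := \sum_(2 <= j < K.+1) _.
have rn := rp n.
have Sb : `|S| <= M * rho n * A * u ^+ 2 / 16 * (2 ^+ K.+1 - 4).
  rewrite -sum_pow2 // mulr_sumr.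
  apply: le_trans (ler_norm_sum _ _ _) _.
  rewrite big_seq_cond [X in _ <= X]big_seq_cond.
  apply: ler_sum => j /andP [hj _]; move: hj; rewrite mem_index_iota => /andP [j2 jK].
  rewrite ltnS in jK.
  have bb := @back_bound (fun k => hv k y) n K y u A (fun k => hv_rec k y).
  rewrite /= in bb.
  have e2 : (n - 2 = n')%N by rewrite /n; slia.
  have hA' : A = `|hv (n - 2) y| by rewrite e2.
  have := bb hy hA' u1 u4 yb Kn j (ltnW j2) jK.
  case: j j2 jK => [//|k] j2 jK /= H.
  have rb := @rho_bound rho nu n K rp nu0 hr (leq_trans _ Kn) k.+1 jK.
  have := rb; rewrite -/u => {}rb.
  have A0 : 0 <= A by rewrite hA.
  have ta := @term_alg `|hv (n - k.+1) y| A u k (normr_ge0 _) A0 u1 H.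
  have K2 : (K < 2 * K)%N by slia.
  have {}rb := rb K2.
  have gm := gM k.+1 j2 jK.
  have M0 : 0 <= M by apply: le_trans gm.
  set h := `|hv (n - k.+1) y| in ta *.
  have h0 : 0 <= h by apply: normr_ge0.
  have r0 := rp (n - k.+1)%N.
  rewrite !normrM (gtr0_norm r0) -/h.
  have s1 : `|gamma k.+1| * rho (n - k.+1)%N * h <= M * rho (n - k.+1)%N * h.
    by apply: ler_wpM2r => //; apply: ler_wpM2r => //; apply: ltW.
  apply: le_trans s1 _.
  have s2 : M * rho (n - k.+1)%N * h <= M * (rho n * (u / 2) ^+ k.+1) * h.
    by apply: ler_wpM2r => //; apply: ler_wpM2l.
  apply: le_trans s2 _.
  have s3 : M * rho n * ((u / 2) ^+ k.+1 * h) <= M * rho n * (A * u ^+ 2 * 2 ^+ k.+1 / 16).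
    by apply: ler_wpM2l => //; apply: mulr_ge0 => //; apply: ltW.
  have -> : M * (rho n * (u / 2) ^+ k.+1) * h = M * rho n * ((u / 2) ^+ k.+1 * h) by ring.
  apply: le_trans s3 _.
  by rewrite le_eqVlt; apply/orP; left; apply/eqP; field.
have A0 : 0 < A by [].
have sS : - (s * S) >= - `|S|.
  by rewrite lerN2 -[X in _ <= X]mul1r -as1 -normrM ler_norm.
have eN : (n%:R : R) - 1 = n'.+1%:R by rewrite /n -addn1 natrD addrK.
rewrite eN in fin.
have f2 : (M * u ^+ 2 * (2 ^+ K.+1 - 4)) * (rho n * A / 16) <
          (8 * n'.+1%:R) * (rho n * A / 16).
  have pos : 0 < rho n * A / 16 by apply: divr_gt0 => //; apply: mulr_gt0.
  by rewrite ltr_pM2r.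
rewrite mulr0 add0r.
have E1 : forall a b h S0 : R, - s * (a * - (b * h) + S0) = a * b * (s * h) - s * S0.
  by move=> *; ring.
rewrite E1 -/A.
have : M * rho n * A * u ^+ 2 / 16 * (2 ^+ K.+1 - 4) = 
   (M * u ^+ 2 * (2 ^+ K.+1 - 4)) * (rho n * A / 16) by field.
have : 8 * n'.+1%:R * (rho n * A / 16) = rho n * n'.+1%:R / 2 * A by field.
lra.
Qed.

Lemma deriv_simple (rs : seq R) x c : c != 0 -> uniq rs -> x \in rs ->
  (c *: \prod_(y <- rs) ('X - y%:P))^`().[x] != 0.
Proof.
move=> c0 u xin.
rewrite (perm_big _ (perm_to_rem xin)) big_cons derivZ derivM derivXsubC.
rewrite hornerZ hornerD !hornerM hornerXsubC subrr mul0r addr0 (hornerC 1) mul1r.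
rewrite mulf_neq0 // horner_prod prodf_seq_neq0; apply/allP => y yin /=.
rewrite hornerXsubC subr_eq0; apply: contraTneq yin => ->.
by rewrite mem_rem_uniqF.
Qed.

Lemma complex_part (q : {poly R}) c N (w : nat -> R) : c != 0 -> incr w N ->
  q = c *: \prod_(i < N) ('X - (w i)%:P) ->
  forall z : R[i], root (map_poly (real_complex R) q) z ->
    Im z = 0 /\ ~~ root (map_poly (real_complex R) q)^`() z.
Proof.
move=> c0 wi qe z hz.
rewrite -(prod_mkseq w N (fun x => 'X - x%:P)) in qe.
have [x xin ->] : exists2 x, x \in mkseq w N & z = real_complex R x.
  move: hz; rewrite qe map_polyZ map_prod_XsubC rootZ ?fmorph_eq0 //.
  rewrite /root horner_prod prodf_seq_eq0 => /hasP [x xin].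
  by rewrite hornerXsubC subr_eq0 => /eqP ->; exists x.
split; first by rewrite -complexIm.
rewrite deriv_map /root horner_map fmorph_eq0 qe.
by apply: deriv_simple => //; exact: incr_uniq.
Qed.

End Herm.

Section Herm2.
Variable R : realType.
Notation hm := (hermite_monic R).
Arguments incr {R}. Arguments incr_le {R z m i j}. Arguments hv {R}.

Lemma root_prod_char c N (w : nat -> R) x : c != 0 ->
  root (c *: \prod_(i < N) ('X - (w i)%:P)) x <-> exists2 i, (i < N)%N & x = w i.
Proof.
move=> c0; rewrite rootZ // /root horner_prod; split.
  by move/prodf_eq0 => [i _]; rewrite hornerXsubC subr_eq0 => /eqP ->; exists i.
move=> [i iN ->]; apply/prodf_eq0; exists (Ordinal iN) => //.
by rewrite hornerXsubC subrr.
Qed.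

Lemma root_hermite k x : root (hermite R k) x = root (hm k) x.
Proof. by rewrite /hermite_monic rootZ // invr_eq0 expf_neq0 // pnatr_eq0. Qed.

Lemma interl_final (q H : {poly R}) m (z w : nat -> R) :
  incr z m -> incr w m.+1 ->
  (forall x, root q x <-> exists2 i, (i < m.+1)%N & x = w i) ->
  (forall x, root H x <-> exists2 i, (i < m)%N & x = z i) ->
  (forall i, (0 < i)%N -> (i <= m)%N -> z i.-1 < w i) ->
  (forall i, (i < m)%N -> w i < z i) ->
  interlaces (fun x => root q x) (fun x => root H x).
Proof.
move=> zi wi rq rH hl hr; split; [|split].
- exists (w 0%N); split; first by apply/rq; exists 0%N.
  move=> v /rH [i im ->]; apply: lt_le_trans (hr 0%N (leq_ltn_trans (leq0n _) im)) _.
  exact: incr_le zi (leq0n i) im.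
- move=> a b /rq [i im ->] /rq [j jm ->] ab nb.
  have ij : (i < j)%N.
    rewrite ltnNge; apply/negP => ji.
    by have := incr_le wi ji im; rewrite leNgt ab.
  have ej : j = i.+1.
    apply/eqP; rewrite eqn_leq ij andbT leqNgt; apply/negP => lt.
    apply: (nb (w i.+1)); first by apply/rq; exists i.+1 => //; apply: ltn_trans lt jm.
    by rewrite (wi _ _ lt jm) andbT; apply: wi => //; apply: ltn_trans lt jm.
  have i_m : (i < m)%N by rewrite -ltnS -ej.
  exists (z i); split; first by apply/rH; exists i.
  by rewrite hr //= ej (hl i.+1 isT i_m).
- move=> a b /rH [i im ->] /rH [j jm ->] ab nb.
  have ij : (i < j)%N.
    rewrite ltnNge; apply/negP => ji.
    by have := incr_le zi ji im; rewrite leNgt ab.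
  have ej : j = i.+1.
    apply/eqP; rewrite eqn_leq ij andbT leqNgt; apply/negP => lt.
    apply: (nb (z i.+1)); first by apply/rH; exists i.+1 => //; apply: ltn_trans lt jm.
    by rewrite (zi _ _ lt jm) andbT; apply: zi => //; apply: ltn_trans lt jm.
  exists (w i.+1); split; first by apply/rq; exists i.+1 => //; rewrite ltnS -ej ltnW.
  rewrite ej in jm *; rewrite (hl i.+1 isT (ltnW jm)) /=; exact: hr.
Qed.
End Herm2.
Arguments hm_size_lc {R}. Arguments hv_root_bound {R}. Arguments q_size {R}.
Arguments incr {R}. Arguments hv {R}.

Theorem mainTheorem6 (R : realType) (rho : nat -> R) (nu : R) (K : nat)
    (gamma : nat -> R) (n : nat) :
  (forall m, 0 < rho m) ->
  0 <= nu <= 1 / 4 ->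
  (forall m, (1 <= m)%N -> 2 * rho m.-1 / rho m <= powR m%:R nu) ->
  (0 < K)%N ->
  gamma 0%N = 1 ->
  gamma K != 0 ->
  threshold nu K gamma <= n%:R ->
  let q := q_poly rho gamma K n in
  (forall z : R[i], root (map_poly (real_complex R) q) z ->
     Im z = 0 /\ ~~ root (map_poly (real_complex R) q)^`() z) /\
  interlaces (fun x : R => root q x) (fun x : R => root (hermite R n.-1) x).
Proof.
move=> rp hnu hr K0 g0 _ thr q.
have [nu0 nu4] : 0 <= nu /\ nu <= 1 / 4 by apply/andP.
move: thr; rewrite /threshold ge_max => /andP [th1 th2].
have Kn : (2 * K <= n)%N by rewrite -(ler_nat R).
have [n' en] : exists n', n = n'.+2 by exists (n - 2)%N; slia.
subst n.
set n := n'.+2 in q th1 th2 Kn *.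
have n1 : (1 : R) <= n%:R by rewrite ler1n.
set u := powR n%:R nu.
have u1 : 1 <= u by rewrite /u; have := ler_powR n1 nu0; rewrite powRr0.
have u4 : u ^+ 4 <= n%:R.
  have u0 : 0 <= u by apply: powR_ge0.
  rewrite -(powR_mulrn 4 u0) /u -powRrM.
  have := @ler_powR _ n%:R n1 (nu * 4%:R) 1; rewrite powRr1 ?ler0n //; apply; lra.
set M := \big[Num.max/0]_(2 <= j < K.+1) `|gamma j|.
have gM : forall j, (2 <= j)%N -> (j <= K)%N -> `|gamma j| <= M.
  move=> j j2 jK; rewrite /M.
  have := @le_bigmax_seq _ R nat (index_iota 2 K.+1) 0 j xpredT (fun j => `|gamma j|).
  by apply; rewrite // mem_index_iota j2 ltnS.
have M0 : 0 <= M.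
  rewrite /M; apply: (big_ind (fun x : R => 0 <= x)) => // x y x0 y0.
  by rewrite le_max x0.
have P61 : 1 <= powR 6 (2 * nu).
  by have := @ler_powR R 6 (ler1n R 6) 0 (2 * nu); rewrite powRr0; apply; lra.
have hK : (2 <= K)%N -> powR (4 : R) (K%:R - 2) = (4 : R) ^+ (K - 2) /\ (K.-1)%:R <= geom6 nu K.
  move=> K2; split.
    by rewrite -(natrB _ K2) powR_mulrn.
  have -> : (K.-1)%:R = \sum_(j < K.-1) (1 : R) by rewrite sumr_const card_ord.
  rewrite /geom6.
  apply: ler_sum => j _.
  have := @ler_powR R 6 (ler1n R 6) 0 (nu * j%:R); rewrite powRr0; apply.
  by apply: mulr_ge0.
have fin := @final_ineq R _ _ _ _ _ K n M0 u1 u4 P61 th1 hK K0 Kn.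
have [z [zi zp zs]] := herm_zeros R n'.
have hroot : forall i, (i < n'.+1)%N -> hv n'.+1 (z i) = 0.
  move=> i im; rewrite /hv zp horner_prod; apply/eqP; rewrite prodf_seq_eq0.
  apply/hasP; exists (Ordinal im); first by rewrite mem_index_enum.
  by rewrite /= hornerXsubC subrr.
have zb : forall i, (i < n'.+1)%N -> z i ^+ 2 < (2 * n'.+1)%:R.
  by move=> i im; apply: hv_root_bound (hroot i im).
have [sq lq] := q_size rho gamma K n (rp n) g0 (isT : (1 <= n)%N).
have zs' : forall i, (i < n'.+1)%N -> 0 < (-1) ^+ (n'.+1 - i) * q.[z i].
  move=> i im; rewrite subSn // exprS mulN1r.
  apply: (@q_sign_core R rho gamma nu K n' (z i) ((-1) ^+ (n' - i)) M) => //.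
  - exact: hroot.
  - by rewrite -expr2 -exprM mulnC exprM sqrrN expr1n expr1n.
  - exact: zs.

  - apply: ltW; apply: lt_le_trans (zb i im) _; rewrite ler_nat; slia.
have lq0 : 0 < lead_coef q by rewrite lq.
have [N1 hN1] := poly_pinfty_gt_lc lq0.
set q2 := (-1) ^+ n *: (q \Po - 'X).
have lq2 : lead_coef q2 = rho n.
  rewrite /q2 lead_coefZ lead_coef_comp ?size_polyN ?size_polyX // lead_coefN lead_coefX.
  rewrite sq lq /= mulrCA -exprD addnn -mul2n exprM sqrrN expr1n expr1n mulr1.
  by [].
have lq20 : 0 < lead_coef q2 by rewrite lq2.
have [N2 hN2] := poly_pinfty_gt_lc lq20.
set B := Num.max (Num.max N1 N2) (2 * n)%:R.
have B1 : N1 <= B by rewrite /B !le_max lexx.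
have B2 : N2 <= B by rewrite /B !le_max lexx orbT.
have B3 : (2 * n)%:R <= B by rewrite /B le_max lexx orbT.
have B4 : (4 : R) <= B by apply: le_trans B3; rewrite ler_nat /n; slia.
have qU : 0 < q.[B] by apply: lt_le_trans (hN1 _ B1).
have qL : 0 < (-1) ^+ n'.+2 * q.[- B].
  apply: lt_le_trans lq20 _; have := hN2 _ B2.
  by rewrite /q2 hornerZ horner_comp !hornerE.
have zLU : forall i, (i < n'.+1)%N -> - B < z i < B.
  move=> i im; have := zb i im.
  have : (2 * n'.+1)%:R <= B by apply: le_trans B3; rewrite ler_nat /n; slia.
  move=> h1 h2; apply/andP; split; nra.
have BB : - B < B by lra.
have [w [wr wl wr' wi wp]] :=
  @interl_roots R q n'.+1 z (- B) B sq lq0 zi zs' zLU BB qL qU.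
have lqn0 : lead_coef q != 0 by rewrite gt_eqF.
split.
  exact: complex_part lqn0 wi wp.
apply: (@interl_final R q (hermite R n'.+1) n'.+1 z w zi wi) => //.
- by move=> x; rewrite {1}wp; apply: root_prod_char.
- move=> x; rewrite root_hermite zp -[\prod_(i < n'.+1) _]scale1r.
  by apply: root_prod_char; apply: oner_neq0.
Qed.
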